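(* Let $p$ be a prime and $a,b,c$ positive integers such that $c$ is a primitive divisor of $p^a-1$, and put $u=\tfrac{p^a-1}{c}$. Then the following are equivalent: (i) $bc$ is a primitive divisor of $p^{ab}-1$; (ii) $bc\mid p^{ab}-1$ and $bc\nmid p^{a\ell}-1$ for all $1\le \ell\le b-1$; (iii) $b\mid u\,\Psi_b(p^a)$ and $b\nmid u\,\Psi_\ell(p^a)$ for all $1\le\ell\le b-1$.
   Context: An integer $e$ is a primitive divisor of $p^a-1$ if $e\mid p^a-1$ and $e\nmid p^t-1$ for every $1\le t<a$. For a positive integer $t$, $\Psi_t(x)=x^{t-1}+\cdots+x+1$. *)

(* Defs.v *)
From mathcomp Require Import all_boot.
Set Implicit Arguments. Unset Strict Implicit. Unset Printing Implicit Defensive.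

Definition primitive_divisor (e p a : nat) : Prop :=
  e %| p ^ a - 1 /\ forall t, 1 <= t -> t < a -> ~~ (e %| p ^ t - 1).

Definition Psi (t x : nat) : nat := \sum_(i < t) x ^ i.

(* Main.v *)
Require Import Defs.
From mathcomp Require Import all_boot zify.

Lemma modred (c p a t : nat) : 0 < p -> c %| p ^ a - 1 -> c %| p ^ t - 1 ->
  c %| p ^ (t %% a) - 1.
Proof.
move=> p0 ha ht.
have e1 : forall k, 0 < p ^ k by move=> k; rewrite expn_gt0 p0.
have ha' : p ^ a %% c = 1 %% c by apply/eqP; rewrite eqn_mod_dvd.
have ht' : p ^ t %% c = 1 %% c by apply/eqP; rewrite eqn_mod_dvd.
rewrite -eqn_mod_dvd //; apply/eqP; rewrite -ht'.
have -> : p ^ t = p ^ (t %% a) * (p ^ a) ^ (t %/ a).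
  by rewrite -expnM -expnD [a * _]mulnC addnC -divn_eq.
by rewrite -modnMmr -(modnXm _ c (p ^ a)) ha' modnXm exp1n modnMmr muln1.
Qed.

Lemma psiE (q l : nat) : q ^ l - 1 = (q - 1) * Psi l q.
Proof. by rewrite !subn1 predn_exp. Qed.

Theorem mainTheorem4 (p a b c : nat) :
  prime p -> 0 < a -> 0 < b -> 0 < c ->
  primitive_divisor c p a ->
  let u := (p ^ a - 1) %/ c in
  [/\ (primitive_divisor (b * c) p (a * b) <->
        (b * c %| p ^ (a * b) - 1 /\
         forall l, 1 <= l -> l <= b - 1 -> ~~ (b * c %| p ^ (a * l) - 1))),
      ((b * c %| p ^ (a * b) - 1 /\
         forall l, 1 <= l -> l <= b - 1 -> ~~ (b * c %| p ^ (a * l) - 1)) <->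
       (b %| u * Psi b (p ^ a) /\
         forall l, 1 <= l -> l <= b - 1 -> ~~ (b %| u * Psi l (p ^ a))))
    & (primitive_divisor (b * c) p (a * b) <->
       (b %| u * Psi b (p ^ a) /\
         forall l, 1 <= l -> l <= b - 1 -> ~~ (b %| u * Psi l (p ^ a))))].
Proof.
move=> pp a0 b0 c0 [hca hprim] u.
have p0 : 0 < p by apply: prime_gt0.
have E1 : primitive_divisor (b * c) p (a * b) <->
        (b * c %| p ^ (a * b) - 1 /\
         forall l, 1 <= l -> l <= b - 1 -> ~~ (b * c %| p ^ (a * l) - 1)).
  split.
    move=> [h1 h2]; split=> // l l1 lb; apply: h2.
      by rewrite muln_gt0 a0.
    by rewrite ltn_pmul2l //; lia.
  move=> [h1 h2]; split=> // t t1 tb; apply/negP=> ht.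
  have hc : c %| p ^ t - 1 by apply: dvdn_trans ht; apply: dvdn_mull.
  have hm := modred _ _ _ _ p0 hca hc.
  have tm0 : t %% a = 0.
    apply/eqP; apply: contraT => nz.
    have := hprim _ _ (ltn_pmod t a0); rewrite lt0n nz hm; by move=> /(_ isT).
  move: (divn_eq t a); rewrite tm0 addn0 => te.
  have l1 : 1 <= t %/ a.
    rewrite lt0n; apply/eqP=> z; by move: t1; rewrite te z.
  have lb : t %/ a <= b - 1.
    rewrite -ltnS subn1 prednK // ltn_divLR // mulnC //.
  by move: (h2 _ l1 lb); rewrite [a * _]mulnC -te ht.
have key : forall l, (b * c %| p ^ (a * l) - 1) = (b %| u * Psi l (p ^ a)).
  move=> l; rewrite expnM psiE -(divnK hca) -/u.

  by rewrite mulnAC dvdn_pmul2r.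
have E2 : (b * c %| p ^ (a * b) - 1 /\
         forall l, 1 <= l -> l <= b - 1 -> ~~ (b * c %| p ^ (a * l) - 1)) <->
       (b %| u * Psi b (p ^ a) /\
         forall l, 1 <= l -> l <= b - 1 -> ~~ (b %| u * Psi l (p ^ a))).
  split; move=> [h1 h2]; split.
  - by rewrite -key.
  - by move=> l l1 lb; rewrite -key; apply: h2.
  - by rewrite key.
  - by move=> l l1 lb; rewrite key; apply: h2.
split=> //; exact: iff_trans E1 E2.
Qed.
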